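(* Let $n\ge 2$, let $2\le d_1\le\cdots\le d_n$, let $\delta\ge 2$, $s\in\{1,\dots,n\}$ with $r:=d_s-\delta+1\ge 1$, and let $d=\sum_{i=1}^k(d_i-1)+\ell$ with $0\le k<n$ and $0<\ell\le d_{k+1}-1$ (empty sums are $0$ and empty products are $1$). Write $\kappa=\dim_{\mathbb F_q}\mathcal D^{(\delta,s)}_{\mathcal X}(d)$. Then $$(d_{k+1}-\ell)\prod_{i=k+2}^n d_i=W^{(1)}(\mathcal C_{\mathcal X}(d))\le W^{(1)}(\mathcal D^{(\delta,s)}_{\mathcal X}(d))\le m-\kappa-\left(\left\lceil\frac{\kappa}{r}\right\rceil-1\right)(\delta-1)+1 .$$ Moreover, if either (i) $k+2\le n$ and $d_{k+2}\le d_s$, or (ii) $d_s\le d_{k+1}$ and $0\le d_s-(d_{k+1}-\ell)<r$, then $W^{(1)}(\mathcal D^{(\delta,s)}_{\mathcal X}(d))=W^{(1)}(\mathcal C_{\mathcal X}(d))=(d_{k+1}-\ell)\prod_{i=k+2}^n d_i$.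
   Context: Let $\mathbb F_q$ be a finite field, $K_1,\dots,K_n\subseteq\mathbb F_q$ with $d_i=|K_i|$, and $\mathcal X=K_1\times\cdots\times K_n=\{\boldsymbol\alpha_1,\dots,\boldsymbol\alpha_m\}$ (a fixed enumeration), $m=\prod_{i=1}^n d_i$. Let $\Psi:\mathbb F_q[X_1,\dots,X_n]\to\mathbb F_q^m$, $f\mapsto(f(\boldsymbol\alpha_1),\dots,f(\boldsymbol\alpha_m))$. For $d\ge 0$, $\mathbb F_q[X_1,\dots,X_n]_{\le d}$ is the space of polynomials of degree at most $d$ together with $0$. The affine cartesian code is $\mathcal C_{\mathcal X}(d)=\Psi(\mathbb F_q[X_1,\dots,X_n]_{\le d})$. For integers $\delta\ge 2$ and $s\in\{1,\dots,n\}$, $\mathcal P^{(\delta,s)}_d$ is the set of $f\in\mathbb F_q[X_1,\dots,X_n]_{\le d}$ with $\deg_{X_s}f<d_s-\delta+1$, together with $0$; the $(\delta,s)$-quasi affine cartesian code is $\mathcal D^{(\delta,s)}_{\mathcal X}(d)=\Psi(\mathcal P^{(\delta,s)}_d)$. $W^{(1)}(C)$ denotes the minimum Hamming distance (minimum weight of a nonzero codeword) of a linear code $C$; $\lceil x\rceil$ is the least integer $\ge x$. *)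

(* Defs.v *)
From HB Require Import structures.
From mathcomp Require Import all_boot all_algebra.
From mathcomp Require Import mpoly.
From Stdlib Require Import ClassicalEpsilon.

Set Implicit Arguments.
Unset Strict Implicit.
Unset Printing Implicit Defensive.
Import GRing.Theory.
Local Open Scope ring_scope.

Definition pb (P : Prop) : bool :=
  if excluded_middle_informative P then true else false.

Section AffineCartesian.
Variables (F : finFieldType) (n : nat) (K : 'I_n -> {set F}).

Definition Xset : {set {ffun 'I_n -> F}} := [set x : {ffun 'I_n -> F} | [forall i, x i \in K i]].

(* m = |X|; codewords live in F^m = 'rV[F]_m, with the fixed enumeration
   enum_val : 'I_m -> X of the grid. *)
Definition Psi (f : {mpoly F[n]}) : 'rV[F]_#|Xset| :=
  \row_(j < #|Xset|) f.@[fun i => (enum_val j : {ffun 'I_n -> F}) i].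

Definition wt (c : 'rV[F]_#|Xset|) : nat := #|[set j | c 0 j != 0]|.

Definition code (P : {mpoly F[n]} -> Prop) : {set 'rV[F]_#|Xset|} :=
  [set c | pb (exists f, P f /\ Psi f = c)].

(* Minimum Hamming distance = minimum weight of a nonzero codeword
   (default value m for the zero code, which never occurs here). *)
Definition W1 (C : {set 'rV[F]_#|Xset|}) : nat :=
  \big[minn/#|Xset|]_(c in C | c != 0) wt c.

Definition dimF (C : {set 'rV[F]_#|Xset|}) : nat := \dim <<enum C>>%VS.

(* Degree of f in the variable X_s (0 for f = 0). *)
Definition degX (s : 'I_n) (f : {mpoly F[n]}) : nat :=
  (\max_(mm <- msupp f) mm s)%N.

(* F_q[X]_{<= d}: total degree at most d, or f = 0. *)
Definition Pdeg (d : nat) (f : {mpoly F[n]}) : Prop := (msize f <= d.+1)%N.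

Definition Pquasi (delta : nat) (s : 'I_n) (d : nat) (f : {mpoly F[n]}) : Prop :=
  Pdeg d f /\ (degX s f < #|K s| - delta + 1)%N.

Definition CX (d : nat) := code (Pdeg d).
Definition DX (delta : nat) (s : 'I_n) (d : nat) := code (Pquasi delta s d).

End AffineCartesian.

(* Main.v *)
Require Import Defs.
From HB Require Import structures.
From mathcomp Require Import all_boot all_algebra.
From mathcomp Require Import mpoly.
From Stdlib Require Import ClassicalEpsilon.
From mathcomp Require Import zify.

Set Implicit Arguments.
Unset Strict Implicit.
Unset Printing Implicit Defensive.
Import GRing.Theory.
From mathcomp Require Import ring.
From mathcomp Require Import perm.
Section Basics.
Local Open Scope ring_scope.
Variables (F : finFieldType) (n : nat) (K : 'I_n -> {set F}).
Local Notation X := (Xset K).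
Local Notation m := #|Xset K|.

Lemma pbE (P : Prop) : pb P = true <-> P.
Proof. by rewrite /pb; case: excluded_middle_informative. Qed.

Lemma in_code (P : {mpoly F[n]} -> Prop) c :
  (c \in code K P) <-> exists f, P f /\ Psi K f = c.
Proof. by rewrite inE; apply: pbE. Qed.

Lemma wt_le (c : 'rV[F]_m) : (wt c <= m)%N.
Proof. by rewrite /wt; apply: leq_trans (max_card _) _; rewrite card_ord. Qed.

Lemma bigmin_le_seq (T : eqType) (r : seq T) (P : pred T) (G : T -> nat) x0 c :
  c \in r -> P c -> (\big[minn/x0]_(i <- r | P i) G i <= G c)%N.
Proof.
elim: r => // a r IH; rewrite inE big_cons => /orP[/eqP<- Pc|cr Pc].
  by rewrite Pc geq_minl.
case: (P a); last exact: IH.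
by rewrite geq_min IH ?orbT.
Qed.

Lemma W1_le (C : {set 'rV[F]_m}) c : c \in C -> c != 0 -> (W1 C <= wt c)%N.
Proof.
move=> cC c0; rewrite /W1; apply: bigmin_le_seq; first exact: mem_index_enum.
by rewrite cC.
Qed.

Lemma W1_ge (C : {set 'rV[F]_m}) w :
  (forall c, c \in C -> c != 0 -> (w <= wt c)%N) -> (w <= m)%N -> (w <= W1 C)%N.
Proof.
move=> H wm; rewrite /W1; elim/big_ind: _ => //.
  by move=> x y ? ?; rewrite leq_min; apply/andP.
by move=> c /andP[]; apply: H.
Qed.

Lemma W1_le_m (C : {set 'rV[F]_m}) : (W1 C <= m)%N.
Proof.
rewrite /W1; elim/big_ind: _ => //.
by move=> x y ? ?; rewrite geq_min; apply/orP; left.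
by move=> c _; apply: wt_le.
Qed.

Lemma W1_mono (C1 C2 : {set 'rV[F]_m}) : C1 \subset C2 -> (W1 C2 <= W1 C1)%N.
Proof.
move=> sub; apply: W1_ge; last exact: W1_le_m.
by move=> c cC1 c0; apply: W1_le => //; apply: (subsetP sub).
Qed.

Lemma wt_Psi f : wt (Psi K f) = #|[set x in X | f.@[x] != 0]|.
Proof.
rewrite /wt.
have -> : [set x in X | f.@[x] != 0] = enum_val @: [set j : 'I_m | f.@[enum_val j] != 0].
  apply/setP=> x; rewrite [in LHS]inE; apply/idP/imsetP.
    case/andP=> xX fx; exists (enum_rank_in xX x); last by rewrite enum_rankK_in.
    by rewrite inE enum_rankK_in.
  case=> j; rewrite inE => fj ->; rewrite fj andbT; exact: enum_valP.
rewrite card_imset; last exact: enum_val_inj.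
apply: eq_card => j; rewrite !inE mxE.
have -> : (fun i => (enum_val j : {ffun 'I_n -> F}) i) = enum_val j by [].
by [].
Qed.

End Basics.
Fixpoint Gb (cs : seq nat) (D : nat) : nat :=
  if cs is c :: cs' then
    (if (c.-1 <= D)%N then Gb cs' (D - c.-1) else (c - D) * \prod_(y <- cs') y)%N
  else 1%N.

Lemma core_ineq u b c' : (u <= b)%N -> (b <= c')%N -> (u * c' <= b * (c' - (b - u)))%N.
Proof. move=> ub bc. nia. Qed.

Lemma Gb_L1 cs b D : (0 < b)%N -> all (fun y => b <= y)%N cs ->
  (Gb cs D <= b * Gb cs (D + b.-1))%N.
Proof.
elim: cs D => [|c cs IH] D b0 /=; first by rewrite muln1.
case/andP=> bc allb.
case: ifP => h1.
  have -> : (c.-1 <= D + b.-1)%N by rewrite (leq_trans h1 (leq_addr _ _)).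
  have -> : (D + b.-1 - c.-1 = D - c.-1 + b.-1)%N by lia.
  exact: IH.
case: ifP => h2.
  case: cs IH allb => [|c' cs] IH allb /=.
    rewrite big_nil ?muln1; lia.
  case/andP: allb => bc' allb.
  have -> : (c'.-1 <= D + b.-1 - c.-1)%N = false by apply/negbTE; rewrite -ltnNge; lia.
  rewrite big_cons mulnA [X in (_ <= X)%N]mulnA leq_mul2r; apply/orP; right.
  have -> : (D + b.-1 - c.-1 = b - (c - D))%N by lia.
  apply: core_ineq; lia.
rewrite mulnA leq_mul2r; apply/orP; right.
have -> : (c - (D + b.-1) = (c - D) - b.-1)%N by lia.
nia.
Qed.

Lemma Gb_step c cs b D : (0 < b)%N -> (b <= c)%N -> (c - b <= D)%N ->
  all (fun y => c <= y)%N cs -> (Gb (c :: cs) D <= b * Gb cs (D - (c - b)))%N.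
Proof.
move=> b0 bc cbD allc /=.
case: ifP => h1.
  have -> : (D - (c - b) = D - c.-1 + b.-1)%N by lia.
  apply: Gb_L1 => //; apply: sub_all allc => y; exact: leq_trans.
case: cs allc => [|c' cs] allc /=.
  rewrite big_nil muln1; lia.
case/andP: allc => cc' allc.
have -> : (c'.-1 <= D - (c - b))%N = false by apply/negbTE; rewrite -ltnNge; lia.
rewrite big_cons mulnA [X in (_ <= X)%N]mulnA leq_mul2r; apply/orP; right.
have -> : (D - (c - b) = b - (c - D))%N by lia.
apply: core_ineq; lia.
Qed.

Lemma Gb0 cs : all (fun c => 2 <= c)%N cs -> Gb cs 0 = (\prod_(y <- cs) y)%N.
Proof.
elim: cs => [|c cs IH] /=; first by rewrite big_nil.
case/andP=> c2 _; rewrite big_cons.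
have -> : (c.-1 <= 0)%N = false by apply/negbTE; rewrite -ltnNge; lia.
by rewrite subn0.
Qed.

Lemma Gb_closed (h : nat -> nat) k : forall a len l,
  (forall i, (a <= i < a + len)%N -> (2 <= h i)%N) -> (k < len)%N -> (0 < l)%N ->
  (l <= h (a + k) - 1)%N ->
  Gb [seq h i | i <- iota a len] (\sum_(i <- iota a k) (h i - 1) + l)%N
  = ((h (a + k) - l) * \prod_(i <- iota (a + k).+1 (len - k.+1)) h i)%N.
Proof.
elim: k => [|k IH] a [|len] l H2 // kl l0 lh /=.
  rewrite big_nil add0n addn0 subSS subn0 in lh *.
  case: ifP => c1.
    have -> : l = (h a - 1)%N by lia.
    have -> : (h a - 1 - (h a).-1 = 0)%N by lia.
    rewrite Gb0; last first.
      apply/allP=> y /mapP[i]; rewrite mem_iota => /andP[i1 i2] ->; apply: H2; lia.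
    rewrite big_map; have -> : (h a - (h a - 1) = 1)%N by have := H2 a; lia.
    by rewrite mul1n.
  by rewrite big_map.
rewrite big_cons.
have -> : ((h a).-1 <= h a - 1 + \sum_(j <- iota a.+1 k) (h j - 1) + l)%N by lia.
have -> : (h a - 1 + \sum_(j <- iota a.+1 k) (h j - 1) + l - (h a).-1
   = \sum_(j <- iota a.+1 k) (h j - 1) + l)%N by lia.
rewrite IH.
- by have -> : (a.+1 + k = a + k.+1)%N by lia.
- move=> i hi; apply: H2; lia.
- by [].
- by [].
- by have -> : (a.+1 + k = a + k.+1)%N by lia.
Qed.
Section LowDeg.
Local Open Scope ring_scope.
Variables (F : finFieldType) (n : nat) (K : 'I_n -> {set F}).
Local Notation point := {ffun 'I_n -> F}.

Definition upd (x : point) (j : 'I_n) (a : F) : point :=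
  [ffun i => if i == j then a else x i].

Lemma upd_eq x j a : upd x j a j = a.
Proof. by rewrite ffunE eqxx. Qed.
Lemma upd_neq x j a i : i != j -> upd x j a i = x i.
Proof. by rewrite ffunE => /negPf ->. Qed.
Lemma upd_upd x j a b : upd (upd x j b) j a = upd x j a.
Proof. by apply/ffunP=> i; rewrite !ffunE; case: eqP. Qed.
Lemma upd_id x j : upd x j (x j) = x.
Proof. by apply/ffunP=> i; rewrite !ffunE; case: eqP => // ->. Qed.

Fixpoint lowdeg (J : seq 'I_n) (D : nat) (g : point -> F) {struct J} : Prop :=
  match J with
  | [::] => forall x y, g x = g y
  | j :: J' => exists phi : nat -> point -> F,
      (forall e, (e <= D)%N -> lowdeg J' (D - e) (phi e)) /\
      forall x, g x = \sum_(e < D.+1) x j ^+ e * phi e x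
  end.

Lemma ld_dep J D g : lowdeg J D g ->
  forall x y : point, (forall i, i \in J -> x i = y i) -> g x = g y.
Proof.
elim: J D g => [|j J IH] D g /=; first by move=> H x y _; apply: H.
case=> phi [Hphi Hg] x y Hxy; rewrite !Hg Hxy ?mem_head //.
apply: eq_bigr => e _; congr (_ * _); apply: (IH _ _ (Hphi e _)).
  by rewrite -ltnS.
by move=> i iJ; apply: Hxy; rewrite inE iJ orbT.
Qed.

Lemma ld_ext J D g g' : lowdeg J D g -> (forall x, g x = g' x) -> lowdeg J D g'.
Proof.
case: J => [|j J] /=; first by move=> H E x y; rewrite -!E.
by case=> phi [H1 H2] E; exists phi; split=> // x; rewrite -E.
Qed.

Lemma ld0 J D : lowdeg J D (fun _ => 0).
Proof.
elim: J D => [|j J IH] D //=.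
exists (fun _ _ => 0); split=> // x; rewrite big1 // => e _; exact: mulr0.
Qed.

Lemma ld_lin J D c g1 g2 : lowdeg J D g1 -> lowdeg J D g2 ->
  lowdeg J D (fun x => c * g1 x + g2 x).
Proof.
elim: J D g1 g2 => [|j J IH] D g1 g2 /=; first by move=> H1 H2 x y; rewrite (H1 x y) (H2 x y).
case=> phi1 [P1 H1] [phi2 [P2 H2]].
exists (fun e x => c * phi1 e x + phi2 e x); split.
  by move=> e le; apply: IH; [apply: P1|apply: P2].
move=> x; rewrite H1 H2 mulr_sumr -big_split /=; apply: eq_bigr => e _.
by rewrite mulrDr mulrCA.
Qed.

Lemma ld_sum J D (I : Type) (r : seq I) (P : pred I) (c : I -> F)
    (G : I -> point -> F) :
  (forall i, P i -> lowdeg J D (G i)) ->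
  lowdeg J D (fun x => \sum_(i <- r | P i) c i * G i x).
Proof.
move=> HG; elim: r => [|i r IH].
  by apply: ld_ext (ld0 J D) _ => x; rewrite big_nil.
case Pi: (P i).
  apply: ld_ext (ld_lin (c i) (HG i Pi) IH) _ => x.
  by rewrite big_cons Pi.
by apply: ld_ext IH _ => x; rewrite big_cons Pi.
Qed.

Lemma ld_mono J D D' g : (D <= D')%N -> lowdeg J D g -> lowdeg J D' g.
Proof.
elim: J D D' g => [|j J IH] D D' g //= le [phi [Hphi Hg]].
exists (fun e => if (e <= D)%N then phi e else fun _ => 0); split.
  move=> e le'; case: ifP => leD; last exact: ld0.
  by apply: (IH (D - e)%N); [apply: leq_sub2r | apply: Hphi].
have le1 : (D.+1 <= D'.+1)%N by [].
move=> x; rewrite Hg (big_ord_widen D'.+1 (fun e : nat => x j ^+ e * phi e x) le1).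
rewrite big_mkcond /=; apply: eq_bigr => i _.
by rewrite ltnS; case: ifP => _ //=; rewrite mulr0.
Qed.

Lemma geomF (t a : F) e :
  t ^+ e - a ^+ e = (t - a) * \sum_(i < e) t ^+ i * a ^+ (e - i.+1).
Proof.
elim: e => [|e IH]; first by rewrite big_ord0 !expr0 subrr mulr0.
rewrite big_ord_recl /= expr0 mul1r subn1 /=.
have -> : \sum_(i < e) t ^+ (lift ord0 i) * a ^+ (e.+1 - (lift ord0 i).+1)
        = t * \sum_(i < e) t ^+ i * a ^+ (e - i.+1).
  rewrite mulr_sumr; apply: eq_bigr => i _; rewrite lift0 subSS exprS; ring.
have H : (t - a) * (t * \sum_(i < e) t ^+ i * a ^+ (e - i.+1)) = t * (t ^+ e - a ^+ e).
  by rewrite IH; ring.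
rewrite mulrDr H !exprS; ring.
Qed.

Definition gridJ (J : seq 'I_n) (x : point) := forall i, i \in J -> x i \in K i.

Lemma gridJ_upd J x j a : j \notin J -> gridJ J x -> gridJ J (upd x j a).
Proof.
move=> jJ gx i iJ; rewrite upd_neq ?gx //.
by apply: contraNneq jJ => <-.
Qed.

Lemma ld_upd_val j J D g a x : j \notin J -> lowdeg (j :: J) D g ->
  exists phi : nat -> point -> F,
   (forall e, (e <= D)%N -> lowdeg J (D - e) (phi e)) /\
   g (upd x j a) = \sum_(e < D.+1) a ^+ e * phi e x.
Proof.
move=> jJ [phi [Hphi Hg]]; exists phi; split=> //.
rewrite Hg upd_eq; apply: eq_bigr => e _; congr (_ * _).
apply: (ld_dep (Hphi e _)); first by rewrite -ltnS.
by move=> i iJ; rewrite upd_neq //; apply: contraNneq jJ => <-.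
Qed.

Lemma ld_slice j J D h a : j \notin J -> lowdeg (j :: J) D h ->
  lowdeg J D (fun x => h (upd x j a)).
Proof.
move=> jJ [phi [Hphi Hg]].
apply: ld_ext (@ld_sum J D _ (index_enum 'I_D.+1) predT (fun e : 'I_D.+1 => a ^+ e)
     (fun e : 'I_D.+1 => phi e) _) _.
  move=> e _; apply: (ld_mono (leq_subr e D)); apply: Hphi; by rewrite -ltnS.
move=> x; rewrite Hg upd_eq; apply: eq_bigr => e _; congr (_ * _).
apply: (ld_dep (Hphi e _)); first by rewrite -ltnS.
by move=> i iJ; rewrite upd_neq //; apply: contraNneq jJ => <-.
Qed.

Lemma ld_div j J D g a0 : j \notin J -> lowdeg (j :: J) D g ->
  (forall x, gridJ J x -> g (upd x j a0) = 0) ->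
  (forall x, gridJ J x -> g x = 0) \/
  ((0 < D)%N /\ exists h, lowdeg (j :: J) D.-1 h /\
     forall x, gridJ J x -> g x = (x j - a0) * h x).
Proof.
move=> jJ Hld Hz.
have Hld' := Hld; case: Hld' => phi [Hphi Hg].
have R0 : forall x, gridJ J x -> \sum_(e < D.+1) a0 ^+ e * phi e x = 0.
  move=> x gx; rewrite -[RHS](Hz x gx) Hg upd_eq; apply: eq_bigr => e _.
  congr (_ * _); apply: (ld_dep (Hphi e _)); first by rewrite -ltnS.
  by move=> i iJ; rewrite upd_neq //; apply: contraNneq jJ => <-.
case: D Hld phi Hphi Hg R0 => [|D] Hld phi Hphi Hg R0.
  left=> x gx; rewrite -(R0 x gx) Hg !big_ord1 !expr0 //.
right; split=> //=.
pose psi i x := \sum_(e < D.+2 | (i < e)%N) a0 ^+ (e - i.+1) * phi e x.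
exists (fun x : point => \sum_(i < D.+1) x j ^+ i * psi i x); split.
  exists psi; split=> // i le.
  apply: (@ld_sum J (D - i) _ (index_enum 'I_D.+2) (fun e : 'I_D.+2 => (i < e)%N)
     (fun e : 'I_D.+2 => a0 ^+ (e - i.+1)) (fun e : 'I_D.+2 => phi e)).
  move=> e lt; apply: (@ld_mono _ (D.+1 - e)%N); first by lia.
  by apply: Hphi; rewrite -ltnS.
move=> x gx.
have -> : g x = \sum_(e < D.+2) (x j ^+ e - a0 ^+ e) * phi e x.
  by under [RHS]eq_bigr do rewrite mulrBl; rewrite sumrB (R0 x gx) subr0 Hg.
under eq_bigr do rewrite geomF -mulrA mulr_suml.
rewrite -mulr_sumr; congr (_ * _).
have -> : \sum_(e < D.+2) \sum_(i < e) x j ^+ i * a0 ^+ (e - i.+1) * phi e x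
   = \sum_(e < D.+2) \sum_(i < D.+1) (if (i < e)%N then x j ^+ i * a0 ^+ (e - i.+1) * phi e x else 0).
  apply: eq_bigr => e _.
  have le : (e <= D.+1)%N by rewrite -ltnS.
  rewrite (big_ord_widen D.+1 (fun i : nat => x j ^+ i * a0 ^+ (e - i.+1) * phi e x) le).
  by rewrite big_mkcond.
rewrite exchange_big /=; apply: eq_bigr => i _.
rewrite /psi mulr_sumr [RHS]big_mkcond /=; apply: eq_bigr => e _.
by case: ifP => _; rewrite ?mulr0 // mulrA.
Qed.

Lemma ld_roots j J (Z : seq F) : j \notin J -> uniq Z -> forall D g,
  lowdeg (j :: J) D g ->
  (forall a x, a \in Z -> gridJ J x -> g (upd x j a) = 0) ->
  (forall x, gridJ J x -> g x = 0) \/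
  ((size Z <= D)%N /\ exists h, lowdeg (j :: J) (D - size Z) h /\
     forall x, gridJ J x -> g x = \prod_(a <- Z) (x j - a) * h x).
Proof.
move=> jJ; elim: Z => [|a0 Z IH] uZ D g Hld Hz.
  right; split=> //; exists g; rewrite subn0; split=> // x _.
  by rewrite big_nil mul1r.
move: uZ => /= /andP[a0Z uZ].
have := ld_div jJ Hld (fun x gx => Hz a0 x (mem_head _ _) gx).
case=> [L|[D0 [h1 [Hh1 Eh1]]]]; first by left.
have Hz1 : forall a x, a \in Z -> gridJ J x -> h1 (upd x j a) = 0.
  move=> a x aZ gx.
  have aZ1 : a \in a0 :: Z by rewrite inE aZ orbT.
  have g0 := Hz a x aZ1 gx.
  rewrite Eh1 ?upd_eq in g0; last exact: gridJ_upd.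
  move/eqP: g0; rewrite mulf_eq0 subr_eq0 => /orP[/eqP aa0|/eqP //].
  by move: a0Z; rewrite -aa0 aZ.
have [L|[sZ [h [Hh Eh]]]] := IH uZ _ _ Hh1 Hz1.
  by left=> x gx; rewrite Eh1 // L // mulr0.
right; split; first by rewrite /=; lia.
exists h; split.
  by have -> : (D - size (a0 :: Z) = D.-1 - size Z)%N by rewrite /=; lia.
by move=> x gx; rewrite Eh1 // Eh // big_cons mulrA.
Qed.

Definition grid0 (J : seq 'I_n) (x : point) : bool :=
  [forall i, if i \in J then x i \in K i else x i == 0].

Definition cnt (J : seq 'I_n) (g : point -> F) : nat :=
  #|[set x | grid0 J x & g x != 0]|.

Lemma grid0_gridJ J x : grid0 J x -> gridJ J x.
Proof. by move=> /forallP gx i iJ; have := gx i; rewrite iJ. Qed.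

Lemma cnt_split j J g : j \notin J ->
  cnt (j :: J) g = (\sum_(a in K j) cnt J (fun x => g (upd x j a)))%N.
Proof.
move=> jJ; rewrite /cnt -sum1_card.
rewrite (partition_big (fun x : point => x j) (fun a => a \in K j)) /=; last first.
  by move=> x; rewrite inE => /andP[/forallP gx _]; have := gx j; rewrite mem_head.
apply: eq_bigr => a aK; rewrite sum1dep_card.
set B := [set x | grid0 J x & g (upd x j a) != 0].
have -> : [set x | [&& (x \in [set x0 | grid0 (j :: J) x0 & g x0 != 0]) & (x j == a)]]
     = (fun y => upd y j a) @: B.
  apply/setP=> x; rewrite !inE; apply/idP/imsetP.
    case/andP=> /andP[/forallP gx gx0] /eqP xa.
    exists (upd x j 0); last by rewrite upd_upd -xa upd_id.
    rewrite inE upd_upd -xa upd_id gx0 andbT; apply/forallP=> i.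
    case: (eqVneq i j) => [->|ij]; first by rewrite (negPf jJ) upd_eq.
    rewrite upd_neq //; have := gx i; rewrite inE (negPf ij) /=; by [].
  case=> y; rewrite inE => /andP[/forallP gy gy0] ->; rewrite gy0 upd_eq eqxx ?andbT.
  apply/forallP=> i /=; case: (eqVneq i j) => [->|ij]; first by rewrite mem_head upd_eq.
  by rewrite in_cons (negPf ij) /= upd_neq //; apply: gy.
rewrite card_in_imset //.
move=> y1 y2; rewrite !inE => /andP[/forallP g1 _] /andP[/forallP g2 _] E.
apply/ffunP=> i; case: (eqVneq i j) => [->|ij].
  by have := g1 j; have := g2 j; rewrite (negPf jJ) => /eqP -> /eqP ->.
by rewrite -(upd_neq y1 a ij) E upd_neq.
Qed.

Lemma grid0_upd0 j J x : j \notin J -> grid0 (j :: J) x -> grid0 J (upd x j 0).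
Proof.
move=> jJ /forallP gx; apply/forallP=> i.
case: (eqVneq i j) => [->|ij]; first by rewrite (negPf jJ) upd_eq.
by rewrite upd_neq //; have := gx i; rewrite inE (negPf ij).
Qed.

Lemma gridJ_cons j J x : gridJ (j :: J) x -> gridJ J x.
Proof. by move=> gx i iJ; apply: gx; rewrite inE iJ orbT. Qed.

Lemma AF J : uniq J -> sorted leq [seq #|K j| | j <- J] -> forall D g,
  lowdeg J D g -> (exists x, grid0 J x && (g x != 0)) ->
  (Gb [seq #|K j| | j <- J] D <= cnt J g)%N.
Proof.
elim: J => [|j J IH] /=.
  move=> _ _ D g _ [x xg]; apply/card_gt0P; exists x; by rewrite inE.
case/andP=> jJ uJ srt D g Hld [x0 /andP[gx0 gx0nz]].
have srt' := path_sorted srt.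
have allc := order_path_min leq_trans srt.
pose B := [set a in K j | [exists x, grid0 J x && (g (upd x j a) != 0)]].
pose Z := enum (K j :\: B).
have proj : forall a x, gridJ J x ->
    exists x', grid0 J x' /\ g (upd x' j a) = g (upd x j a).
  move=> a x gx.
  exists [ffun i => if i \in J then x i else 0]; split.
    apply/forallP=> i; rewrite ffunE; case iJ: (i \in J) => //; exact: gx i iJ.
  apply: (ld_dep (J := j :: J) Hld) => i; rewrite inE => /orP[/eqP->|iJ]; first by rewrite !upd_eq.
  have ij : i != j by apply: contraNneq jJ => <-.
  by rewrite !upd_neq // ffunE iJ.
have Hz : forall a x, a \in Z -> gridJ J x -> g (upd x j a) = 0.
  move=> a x; rewrite mem_enum !inE => /andP[naB aK] gx.
  apply/eqP; apply: contraNT naB => nz; rewrite aK /=.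
  have [x' [gx' E]] := proj a x gx.
  by apply/existsP; exists x'; rewrite gx' E.
have [L|[sZ [h [Hh Eh]]]] := ld_roots jJ (enum_uniq _) Hld Hz.
  have g0J : gridJ J x0 by apply: (@gridJ_cons j); apply: grid0_gridJ.
  by move: gx0nz; rewrite L // eqxx.
have BK : B \subset K j by apply/subsetP=> a; rewrite inE => /andP[].
have sizeZ : size Z = (#|K j| - #|B|)%N.
  by rewrite /Z -cardE cardsD (setIidPr BK).
have b0 : (0 < #|B|)%N.
  apply/card_gt0P; exists (x0 j); rewrite inE.
  have := forallP gx0 j; rewrite mem_head => -> /=.
  apply/existsP; exists (upd x0 j 0); rewrite grid0_upd0 //=.
  by rewrite upd_upd upd_id.
have bc : (#|B| <= #|K j|)%N by apply: subset_leq_card.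
pose G' := Gb [seq #|K i| | i <- J] (D - size Z).
have key : forall a, a \in K j -> ((a \in B) * G' <= cnt J (fun x => g (upd x j a)))%N.
  move=> a aK; case aB: (a \in B); last by rewrite mul0n.
  rewrite mul1n.
  have pnz : \prod_(z <- Z) (a - z) != 0.
    rewrite prodf_seq_neq0; apply/allP=> z zZ /=; rewrite subr_eq0.
    apply: contraTneq zZ => <-; by rewrite mem_enum inE aB.
  have -> : cnt J (fun x => g (upd x j a)) = cnt J (fun x => h (upd x j a)).
    rewrite /cnt; apply: eq_card => x; rewrite !inE; case gx: (grid0 J x) => //=.
    rewrite Eh ?upd_eq; last by apply: gridJ_upd => //; apply: grid0_gridJ.
    by rewrite mulf_eq0 negb_or pnz.
  apply: IH => //; first exact: ld_slice.
  move: aB; rewrite inE => /andP[_ /existsP[x /andP[gx nz]]].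
  exists x; rewrite gx /=; move: nz; rewrite Eh ?upd_eq; last first.
    by apply: gridJ_upd => //; apply: grid0_gridJ.
  by rewrite mulf_eq0 negb_or => /andP[].
rewrite cnt_split //.
apply: (leq_trans (Gb_step (D := D) b0 bc _ allc)); first by rewrite -sizeZ.
rewrite -sizeZ -/G'.
apply: (@leq_trans (\sum_(a in K j) (a \in B) * G')%N); last exact: leq_sum.
have -> : (\sum_(a in K j) (a \in B) * G' = \sum_(a in B) G')%N.
  rewrite big_mkcond [RHS]big_mkcond; apply: eq_bigr => a _.
  case: (boolP (a \in B)) => aB; last by case: (a \in K j); rewrite ?mul0n.
  by rewrite (subsetP BK a aB) mul1n.
by rewrite sum_nat_const.
Qed.

Lemma ld_monom J (mm : 'X_{1..n}) : forall D, (\sum_(i <- J) mm i <= D)%N ->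
  lowdeg J D (fun x : point => \prod_(i <- J) x i ^+ mm i).
Proof.
elim: J => [|j J IH] D /=; first by move=> _ x y; rewrite !big_nil.
rewrite big_cons => hD.
exists (fun e => if e == mm j then (fun x : point => \prod_(i <- J) x i ^+ mm i) else (fun _ => 0)).
split.
  move=> e le; case: ifP => [/eqP->|_]; last exact: ld0.
  apply: IH; lia.
move=> x; have lt : (mm j < D.+1)%N by lia.
rewrite big_cons (bigD1 (Ordinal lt)) //= eqxx [X in _ = _ + X]big1 ?addr0 //.
move=> e ne; case: ifP => [/eqP E|_]; last by rewrite mulr0.
by move: ne; rewrite -val_eqE /= E eqxx.
Qed.

Lemma ld_poly (f : {mpoly F[n]}) D : (msize f <= D.+1)%N ->
  lowdeg (enum 'I_n) D (fun x => f.@[x]).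
Proof.
move=> hs.
apply: ld_ext (@ld_sum _ D _ (msupp f) (fun mm => mm \in msupp f) (fun mm => f@_mm)
   (fun mm (x : point) => \prod_(i <- enum 'I_n) x i ^+ mm i) _) _.
  move=> mm mmf; apply: ld_monom.
  rewrite (_ : \sum_(i <- enum 'I_n) mm i = mdeg mm)%N; last by rewrite mdegE big_enum.
  have := leq_trans (msize_mdeg_lt mmf) hs; lia.
move=> x; rewrite mevalE [RHS]big_seq; apply: eq_bigr => mm _.
by rewrite big_enum.
Qed.

End LowDeg.
Section LowerBound.
Local Open Scope ring_scope.
Variables (F : finFieldType) (n : nat) (K : 'I_n -> {set F}).

Lemma sorted_sizes :
  (forall i j : 'I_n, (i <= j)%N -> #|K i| <= #|K j|)%N ->
  sorted leq [seq #|K j| | j <- enum 'I_n].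
Proof.
move=> mono; rewrite sorted_map.
apply: (@sub_sorted _ (relpre val leq)); first by move=> i j /= ij; apply: mono.
by rewrite -sorted_map val_enum_ord iota_sorted.
Qed.

Lemma LB (k : 'I_n) (l : nat) (f : {mpoly F[n]}) :
  (forall i : 'I_n, 2 <= #|K i|)%N ->
  (forall i j : 'I_n, (i <= j)%N -> #|K i| <= #|K j|)%N ->
  (0 < l)%N -> (l <= #|K k| - 1)%N ->
  (msize f <= (\sum_(i < n | (i < k)%N) (#|K i| - 1) + l).+1)%N ->
  Psi K f != 0 ->
  ((#|K k| - l) * \prod_(i < n | (k < i)%N) #|K i| <= wt (Psi K f))%N.
Proof.
move=> K2 mono l0 lk hs nz.
pose h i := #|K (insubd k i)|.
have hval : forall i : 'I_n, h i = #|K i| by move=> i; rewrite /h valKd.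
have Hseq : [seq #|K j| | j <- enum 'I_n] = [seq h i | i <- iota 0 n].
  by rewrite -val_enum_ord -map_comp; apply: eq_map => i /=; rewrite hval.
have kn : (k <= n)%N by apply: ltnW.
have Hsum : (\sum_(i < n | (i < k)%N) (#|K i| - 1) = \sum_(i <- iota 0 k) (h i - 1))%N.
  rewrite (eq_bigr (fun i : 'I_n => h i - 1)%N); last by move=> i _; rewrite hval.
  rewrite -(big_mkord (fun i => i < k)%N (fun i => h i - 1)%N).
  have -> : iota 0 k = index_iota 0 k by rewrite /index_iota subn0.
  by rewrite [RHS](big_nat_widen 0 k n predT) //.
have Hprod : (\prod_(i < n | (k < i)%N) #|K i| = \prod_(i <- iota k.+1 (n - k.+1)) h i)%N.
  rewrite (eq_bigr (fun i : 'I_n => h i)); last by move=> i _; rewrite hval.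
  rewrite -(big_mkord (fun i => k < i)%N h).
  rewrite (@big_cat_nat _ _ _ k.+1 0 n _ _ (leq0n _) (ltn_ord k)) /=.
  rewrite big_nat_cond big1 ?mul1n; last by move=> i /andP[/andP[_ ik] ki]; lia.
  rewrite big_nat_cond; rewrite [RHS]big_seq_cond /index_iota; apply: eq_bigl => i.
  rewrite mem_iota andbT; apply/idP/idP => /andP[]; [move=> /andP[a b] c|move=> a b];
  apply/andP; split; try lia; apply/andP; split; lia.
rewrite Hprod.
have -> : #|K k| = h (0 + k)%N by rewrite add0n hval.
have K2h : forall i, (0 <= i < 0 + n)%N -> (2 <= h i)%N by move=> i _; apply: K2.
rewrite -(Gb_closed K2h) //; last by rewrite add0n hval.
rewrite -Hsum -Hseq wt_Psi.
have -> : [set x in Xset K | f.@[x] != 0] = [set x | grid0 K (enum 'I_n) x & f.@[x] != 0].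
  apply/setP=> x; rewrite !inE; congr (_ && _); apply: eq_forallb => i.
  by rewrite mem_enum.
apply: AF.
- exact: enum_uniq.
- exact: sorted_sizes.
- exact: ld_poly.
case: (pickP (fun j => Psi K f 0 j != 0)) => [j nzj|none]; last first.
  move/eqP: nz; case; apply/rowP=> j; apply/eqP; rewrite [X in _ == X]mxE.
  exact: negbFE (none j).
exists (enum_val j); apply/andP; split.
  apply/forallP=> i; rewrite mem_enum; have := enum_valP j; rewrite inE => /forallP; apply.
by move: nzj; rewrite mxE.
Qed.

End LowerBound.
Section Construct.
Local Open Scope ring_scope.
Variables (F : finFieldType) (n : nat) (K : 'I_n -> {set F}) (s : 'I_n).

Definition bnd (a b : nat) (p : {mpoly F[n]}) :=
  forall mm, mm \in msupp p -> (mdeg mm <= a)%N /\ (mm s <= b)%N.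

Lemma bnd_mul a b a' b' p q : bnd a b p -> bnd a' b' q -> bnd (a + a') (b + b') (p * q).
Proof.
move=> hp hq mm /msuppM_le /allpairsP[[m1 m2] [/= m1p m2q ->]].
have [h1 h2] := hp _ m1p; have [h3 h4] := hq _ m2q.
by rewrite mdegD mnmDE; split; apply: leq_add.
Qed.

Lemma bnd1 : bnd 0 0 1.
Proof. by move=> mm; rewrite msupp1 inE => /eqP->; rewrite mdeg0 mnm0E. Qed.

Lemma bnd_big (I : Type) (r : seq I) (P : pred I) (G : I -> {mpoly F[n]})
  (A B : I -> nat) : (forall i, P i -> bnd (A i) (B i) (G i)) ->
  bnd (\sum_(i <- r | P i) A i) (\sum_(i <- r | P i) B i) (\prod_(i <- r | P i) G i).
Proof.
move=> H; elim: r => [|i r IH]; first by rewrite !big_nil; exact: bnd1.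
rewrite !big_cons; case Pi: (P i) => //.
exact: bnd_mul (H i Pi) IH.
Qed.

Lemma bnd_lin i (a : F) : bnd 1 (i == s) ('X_i - a%:MP).
Proof.
move=> mm /msuppB_le; rewrite mem_cat msuppX inE msuppC => /orP[/eqP->|].
  by rewrite mdeg1 mnm1E.
case: eqP => _ //; rewrite inE => /eqP->; by rewrite mdeg0 mnm0E.
Qed.

Lemma bnd_msize a b p : bnd a b p -> (msize p <= a.+1)%N.
Proof.
move=> H; rewrite msizeE; apply/bigmax_leqP_seq => mm mmp _.
by have [] := H mm mmp.
Qed.

Lemma bnd_degX a b p : bnd a b p -> (degX s p <= b)%N.
Proof.
move=> H; rewrite /degX; apply/bigmax_leqP_seq => mm mmp _.
by have [] := H mm mmp.
Qed.

Lemma construct (nu : 'I_n -> nat) : (forall i, nu i <= #|K i|)%N ->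
  exists f : {mpoly F[n]}, (msize f <= (\sum_i (#|K i| - nu i)).+1)%N /\
    (degX s f <= #|K s| - nu s)%N /\ wt (Psi K f) = (\prod_i nu i)%N.
Proof.
move=> nuK.
pose S i := [set x in take (#|K i| - nu i) (enum (K i))].
have cardS : forall i, #|S i| = (#|K i| - nu i)%N.
  move=> i; rewrite /S cardsE; apply/eqP; rewrite (card_uniqP _) ?take_uniq ?enum_uniq //.
  by rewrite size_take -cardE; case: ltnP => //; lia.
have SK : forall i, S i \subset K i.
  by move=> i; apply/subsetP=> x; rewrite inE => /mem_take; rewrite mem_enum.
pose f := \prod_(i < n) \prod_(a in S i) ('X_i - a%:MP).
exists f.
have Hb : bnd (\sum_i #|S i|) (\sum_i (#|S i| * (i == s))) f.
  apply: bnd_big => i _.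
  have -> : (#|S i| * (i == s) = \sum_(a in S i) (i == s : nat))%N by rewrite sum_nat_const.
  rewrite -sum1_card.
  by apply: bnd_big => a _; apply: bnd_lin.
have Hs : (\sum_i (#|S i| * (i == s)) = #|S s|)%N.
  rewrite (bigD1 s) //= eqxx muln1 big1 ?addn0 // => i /negPf ->; exact: muln0.
split; first by have := bnd_msize Hb; under eq_bigr do rewrite cardS.
split.
  by have := bnd_degX Hb; rewrite Hs cardS.
rewrite wt_Psi.
have -> : [set x in Xset K | f.@[x] != 0] = [set x | x \in family (fun i => [pred a | a \in K i :\: S i])].
  apply/setP=> x; rewrite !inE /f rmorph_prod /=.
  apply/andP/forallP.
    case=> /forallP xK /prodf_neq0 H i; rewrite inE /= inE xK andbT.
    apply/negP=> xS; have := H i isT; rewrite rmorph_prod /=.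
    have xS' : x i \in S i by rewrite /S inE.
    by move/prodf_neq0/(_ (x i) xS'); rewrite rmorphB /= mevalXU mevalC subrr eqxx.
  move=> H; split; first by apply/forallP=> i; have := H i; rewrite inE /= inE => /andP[].
  apply/prodf_neq0 => i _; rewrite rmorph_prod /=; apply/prodf_neq0 => a aS.
  rewrite rmorphB /= mevalXU mevalC subr_eq0; apply: contraTneq (H i) => ->.
  by move: aS; rewrite !inE => ->.
rewrite cardsE card_family foldrE big_map big_enum /=; apply: eq_bigr => i _.
rewrite cardsD (setIidPr (SK i)) cardS; have := nuK i; lia.
Qed.

End Construct.
Lemma ar_a x y a : (a.+2 <= x)%N -> (x <= y + 1)%N -> (a.+1 <= y)%N.
Proof. lia. Qed.
Lemma ar_b w t a M : (w + (1 + t) + a.+1 <= M + 1)%N -> (w + t + a.+2 <= M + 1)%N.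
Proof. lia. Qed.
Lemma ar_c r x1 x2 x3 x4 x5 x6 : (x1 <= x2 + x6)%N -> (x2 <= x3 + x4)%N -> (x4 <= r)%N ->
  (x3 <= x5)%N -> (x1 <= x5 + (r + x6))%N.
Proof. lia. Qed.

Section LRC.
Local Open Scope ring_scope.
Variables (F : finFieldType) (n : nat) (K : 'I_n -> {set F}).
Variables (delta : nat) (s : 'I_n) (d : nat).
Local Notation m := #|Xset K|.
Local Notation D := (DX K delta s d).
Local Notation r := (#|K s| - delta + 1)%N.
Local Notation V := (<<enum D>>%VS : {vspace 'rV[F]_m}).

Lemma degX_leP b (p : {mpoly F[n]}) :
  reflect (forall mm, mm \in msupp p -> (mm s <= b)%N) (degX s p <= b)%N.
Proof.
by apply: (iffP (bigmax_leqP_seq _ _ _ _)) => H mm mmp; [apply: H|move=> _; apply: H].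
Qed.

Lemma Psi_lin a f g : Psi K (a *: f + g) = a *: Psi K f + Psi K g.
Proof. by apply/rowP=> j; rewrite !mxE mevalD mevalZ. Qed.

Lemma Pquasi_lin a f g : Pquasi K delta s d f -> Pquasi K delta s d g ->
  Pquasi K delta s d (a *: f + g).
Proof.
case=> [hf df] [hg dg]; split.
  rewrite /Pdeg; apply: leq_trans (msizeD_le _ _) _.
  by rewrite geq_max hg (leq_trans (msizeZ_le _ _)).
have hf' : (degX s f <= #|K s| - delta)%N by lia.
have hg' : (degX s g <= #|K s| - delta)%N by lia.
move/degX_leP: hf' => hf'; move/degX_leP: hg' => hg'.
have : (degX s (a *: f + g) <= (#|K s| - delta))%N.
  apply/degX_leP => mm /msuppD_le; rewrite mem_cat => /orP[/msuppZ_le mmf|mmg].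
    exact: hf'.
  exact: hg'.
lia.
Qed.

Lemma D_lin a c1 c2 : c1 \in D -> c2 \in D -> a *: c1 + c2 \in D.
Proof.
move=> /in_code[f [Pf <-]] /in_code[g [Pg <-]]; apply/in_code.
by exists (a *: f + g); split; [apply: Pquasi_lin|rewrite Psi_lin].
Qed.

Lemma D0 : 0 \in D.
Proof.
apply/in_code; exists 0; split; last by apply/rowP=> j; rewrite !mxE meval0.
split; first by rewrite /Pdeg msize0.
by rewrite /degX msupp0 big_nil; lia.
Qed.

Lemma D_span c : c \in V -> c \in D.
Proof.
move=> cV; have := coord_span (X := in_tuple (enum D)) cV.
move=> ->; elim/big_ind: _ => //.
- exact: D0.
- by move=> x y xD yD; rewrite -[x]scale1r; apply: D_lin.
move=> i _; rewrite -[_ *: _]addr0; apply: D_lin (D0).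
by rewrite -mem_enum; apply: mem_nth; exact: ltn_ord.
Qed.

Definition ZT (T : {set 'I_m}) : {vspace 'rV[F]_m} :=
  <<[seq 'e_j | j <- enum (~: T)]>>%VS.

Lemma memZT (T : {set 'I_m}) (c : 'rV[F]_m) : reflect (forall j, j \in T -> c 0 j = 0) (c \in ZT T).
Proof.
apply: (iffP idP).
  move=> cZ j jT; have := coord_span (X := in_tuple [seq 'e_j0 | j0 <- enum (~: T)]) cZ.
  move=> ->; rewrite summxE big1 // => i _; rewrite mxE.
  have := mem_nth 0 (ltn_ord i).
  case/mapP=> j0; rewrite mem_enum inE => nj0 /= ->.
  by rewrite mxE eqxx /=; case: eqP => [E|]; [move: nj0; rewrite -E jT|]; rewrite ?mulr0.
move=> H; rewrite [c]row_sum_delta; apply: rpred_sum => j _.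
case: (boolP (j \in T)) => jT; first by rewrite H // scale0r rpred0.
by apply: rpredZ; apply: memv_span; apply: map_f; rewrite mem_enum inE.
Qed.

Lemma dimcap (U Z E : {vspace 'rV[F]_m}) : (U <= Z + E)%VS ->
  (\dim U <= \dim (U :&: Z) + \dim E)%N.
Proof.
move=> sub; have H := dimv_sum_cap U Z.
have h1 : (\dim (U + Z) <= \dim (Z + E))%N.
  by apply: dimvS; rewrite subv_add sub addvSl.
have h2 : (\dim (Z + E) <= \dim Z + \dim E)%N by have [] := dimv_add_leqif Z E.
lia.
Qed.

Lemma greedy a : forall (U : {vspace 'rV[F]_m}) (T : {set 'I_m}),
  (U <= ZT T)%VS -> (0 < a)%N -> (a <= \dim U)%N ->
  exists c, [/\ c \in U, c != 0 & (wt c + #|T| + a <= m + 1)%N].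
Proof.
elim: a => [|a IH] // U T UZ _ aU.
have U0 : U != 0%VS by rewrite -dimv_eq0; apply: contraTneq aU => ->.
pose c := vpick U.
have cU : c \in U by apply: memv_pick.
have c0 : c != 0 by rewrite vpick0.
have cT : forall j, j \in T -> c 0 j = 0 by apply/memZT; apply: (subvP UZ).
have wtc : (wt c + #|T| <= m)%N.
  rewrite /wt.
  have : [set j | c 0 j != 0] \subset ~: T.
    apply/subsetP=> j; rewrite !inE; apply: contra => jT; by rewrite cT.
  move/subset_leq_card; have := cardsC T; rewrite card_ord.
  move: (#|[set j | c 0 j != 0]|) (#|~: T|) (#|T|) => x y z; lia.
case: a IH aU => [|a] IH aU.
  by exists c; split=> //; lia.
have [j cj] : exists j, c 0 j != 0.
  apply/existsP; apply: contraNT c0 => /existsPn H; apply/eqP/rowP=> j.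
  by rewrite mxE; apply/eqP; rewrite -[_ == _]negbK H.
have jT : j \notin T by apply: contra cj => jT; rewrite cT.
pose U' := (U :&: ZT [set j])%VS.
have sub1 : (U <= ZT [set j] + <<[:: ('e_j : 'rV[F]_m)]>>)%VS.
  apply/subvP=> v vU; rewrite -[v](subrK (v 0 j *: 'e_j)); apply: memv_add.
    by apply/memZT=> j'; rewrite inE => /eqP->; rewrite !mxE !eqxx mulr1 subrr.
  by apply: rpredZ; apply: memv_span; rewrite mem_head.
have dU' : (\dim U <= \dim U' + 1)%N.
  by apply: leq_trans (dimcap sub1) _; rewrite leq_add2l (leq_trans (dim_span _)).
have U'Z : (U' <= ZT (j |: T))%VS.
  apply/subvP=> v; rewrite memv_cap => /andP[/(subvP UZ) /memZT vT /memZT vj].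
  apply/memZT=> j'; rewrite in_setU1 => /orP[/eqP->|j'T]; [apply: vj; exact: set11|exact: vT].
have hU' : (a.+1 <= \dim U')%N by apply: ar_a aU dU'.
have [c' [c'U' c'0 hc']] := IH U' (j |: T) U'Z isT hU'.
exists c'; split=> //; first by move: c'U'; rewrite memv_cap => /andP[].
by move: hc'; rewrite cardsU1 jT /=; apply: ar_b.
Qed.

Definition pt (j : 'I_m) : {ffun 'I_n -> F} := enum_val j.

Lemma Psi_pt f j : Psi K f 0 j = f.@[pt j].
Proof. by rewrite mxE. Qed.

Lemma pt_in j : [forall i, pt j i \in K i].
Proof. by have := enum_valP j; rewrite inE. Qed.

Definition sameline (j j' : 'I_m) := [forall i, (i != s) ==> (pt j i == pt j' i)].

Lemma sameline_sym j j' : sameline j j' -> sameline j' j.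
Proof.
move=> /forallP H; apply/forallP=> i; apply/implyP=> is_.
by rewrite eq_sym; apply: (implyP (H i)).
Qed.

Lemma sameline_trans j1 j2 j3 : sameline j1 j2 -> sameline j2 j3 -> sameline j1 j3.
Proof.
move=> /forallP H1 /forallP H2; apply/forallP=> i; apply/implyP=> is_.
by rewrite (eqP (implyP (H1 i) is_)) (implyP (H2 i) is_).
Qed.

Lemma sameline_eq j j' i : sameline j j' -> i != s -> pt j' i = pt j i.
Proof. by move=> /forallP H is_; apply/esym/eqP; apply: (implyP (H i)). Qed.

Definition line (j : 'I_m) : {set 'I_m} := [set j' | sameline j j'].

Definition ev (j : 'I_m) (t : nat) : 'rV[F]_m :=
  \row_j' (if sameline j j' then pt j' s ^+ t else 0).

Lemma Esp_dim j : (\dim <<[seq ev j t | t <- iota 0 r]>> <= r)%N.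
Proof. by apply: leq_trans (dim_span _) _; rewrite size_map size_iota. Qed.

Lemma V_sub_line j : (V <= ZT (line j) + <<[seq ev j t | t <- iota 0 r]>>)%VS.
Proof.
apply/subvP=> c /D_span /in_code [f [[Pd Pdeg] <-]].
pose y := pt j.
pose cL := \sum_(mm <- msupp f) (f@_mm * \prod_(i | i != s) y i ^+ mm i) *: ev j (mm s).
rewrite -[Psi K f](subrK cL); apply: memv_add.
  apply/memZT=> j'; rewrite inE => sl; rewrite !mxE summxE mevalE.
  apply/eqP; rewrite subr_eq0; apply/eqP; apply: eq_bigr => mm _.
  rewrite !mxE sl -mulrA; congr (_ * _).
  rewrite (bigD1 s) //= mulrC -/(pt j'); congr (_ * _); apply: eq_bigr => i is_.
  by rewrite -/(pt j') (sameline_eq sl is_).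
rewrite /cL big_seq; apply: rpred_sum => mm mmf; apply: rpredZ; apply: memv_span; apply: map_f.
rewrite mem_iota add0n.
have := degX_leP (degX s f) f; move/(_ (leqnn _)) => H; have := H mm mmf; lia.
Qed.

Lemma card_line j : #|line j| = #|K s|.
Proof.
pose phi (j' : 'I_m) := pt j' s.
have inj : {in line j &, injective phi}.
  move=> j1 j2; rewrite !inE => s1 s2 E; apply: enum_val_inj.
  apply/ffunP=> i; case: (eqVneq i s) => [->|is_]; first exact: E.
  by rewrite -/(pt j1) -/(pt j2) (sameline_eq s1 is_) (sameline_eq s2 is_).
rewrite -(card_in_imset inj); suff -> : phi @: line j = K s by [].
apply/setP=> a; apply/imsetP/idP.
  by case=> j' _ ->; rewrite /phi; apply: (forallP (pt_in j')).
move=> aK.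
have xX : upd (pt j) s a \in Xset K.
  rewrite inE; apply/forallP=> i; case: (eqVneq i s) => [->|is_]; first by rewrite upd_eq.
  by rewrite upd_neq //; apply: (forallP (pt_in j)).
exists (enum_rank_in xX (upd (pt j) s a)); last by rewrite /phi /pt enum_rankK_in // upd_eq.
rewrite inE; apply/forallP=> i; apply/implyP=> is_.
by rewrite /pt enum_rankK_in // upd_neq.
Qed.

Definition closedT (T : {set 'I_m}) := forall j j', j \in T -> sameline j j' -> j' \in T.

Lemma lines t : (t * r < \dim V)%N -> exists T : {set 'I_m},
  [/\ closedT T, #|T| = (t * #|K s|)%N & (\dim V <= \dim (V :&: ZT T) + t * r)%N].
Proof.
elim: t => [|t IH] ht.
  exists set0; split=> //; first by move=> j j'; rewrite in_set0.
    by rewrite cards0.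
  have -> : (V :&: ZT set0)%VS = V.
    by apply/capv_idPl/subvP=> c _; apply/memZT=> j; rewrite in_set0.
  by rewrite addn0.
have ht' : (t * r < \dim V)%N.
  by apply: leq_ltn_trans ht; rewrite mulSn leq_addl.
have [T [clT cardT dimT]] := IH ht'.
have dimU : (r < \dim (V :&: ZT T))%N.
  move: ht dimT; rewrite mulSn; move: (\dim V) (\dim (V :&: ZT T)) (t * r)%N => x y z; lia.
have U0 : (V :&: ZT T)%VS != 0%VS.
  by rewrite -dimv_eq0; apply: contraTneq dimU => ->.
pose c := vpick (V :&: ZT T).
have cU : c \in (V :&: ZT T)%VS by apply: memv_pick.
have c0 : c != 0 by rewrite vpick0.
have [j cj] : exists j, c 0 j != 0.
  apply/existsP; apply: contraNT c0 => /existsPn H; apply/eqP/rowP=> j.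
  by rewrite mxE; apply/eqP; rewrite -[_ == _]negbK H.
have jT : j \notin T.
  apply: contra cj => jT; move: cU; rewrite memv_cap => /andP[_ /memZT H].
  by rewrite H.
exists (T :|: line j); split.
- move=> j1 j2; rewrite in_setU => /orP[j1T|]; first by move=> sl; rewrite in_setU (clT _ _ j1T sl).
  rewrite inE => s1 s2; rewrite in_setU inE (sameline_trans s1 s2) orbT //.
- have dis : T :&: line j = set0.
    apply/setP=> j'; rewrite !inE; apply/negP=> /andP[j'T sl].
    by move: jT; rewrite (clT _ _ j'T (sameline_sym sl)).
  by rewrite cardsU dis cards0 subn0 card_line cardT mulSn addnC.
- have sub : (V :&: ZT T <= ZT (line j) + <<[seq ev j t | t <- iota 0 r]>>)%VS.
    exact: subv_trans (capvSl _ _) (V_sub_line j).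
  have h1 := dimcap sub.
  have h2 := Esp_dim j.
  have h3 : (\dim ((V :&: ZT T) :&: ZT (line j)) <= \dim (V :&: ZT (T :|: line j)))%N.
    apply: dimvS; apply/subvP=> v; rewrite !memv_cap => /andP[/andP[vV /memZT vT] /memZT vL].
    rewrite vV /=; apply/memZT=> j'; rewrite in_setU => /orP[]; [exact: vT|exact: vL].
  move: dimT h1 h2 h3; rewrite mulSn.
  move: (\dim V) (\dim (V :&: ZT T)) (\dim (V :&: ZT T :&: ZT (line j)))
    (\dim <<[seq ev j t0 | t0 <- iota 0 r]>>) (\dim (V :&: ZT (T :|: line j))) (t * r)%N.
  move=> x1 x2 x3 x4 x5 x6; exact: ar_c.
Qed.

Lemma card_X : #|Xset K| = (\prod_i #|K i|)%N.
Proof.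
have -> : Xset K = [set x | x \in family (fun i => [pred a | a \in K i])].
  by apply/setP=> x; rewrite !inE.
by rewrite cardsE card_family foldrE big_map big_enum.
Qed.

End LRC.

Lemma ar_int0 (W M delta : nat) : (W <= M)%N -> (2 <= delta)%N ->
  ((W%:Z) <= M%:Z - 0%:Z - (((0%N)%:Z - 1) * (delta%:Z - 1)) + 1)%R.
Proof. move=> *; lia. Qed.

Lemma ar_int (W M kap t delta X : nat) : X = (t * (delta - 1))%N ->
  (W + kap + X <= M + 1)%N -> (1 <= delta)%N ->
  ((W%:Z) <= M%:Z - kap%:Z - (((t.+1)%:Z - 1) * (delta%:Z - 1)) + 1)%R.
Proof.
move=> -> h d1.
have -> : ((t.+1)%:Z - 1 = t%:Z)%R by rewrite -[1%R]/((1%N)%:Z)%R subzn // subn1.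
have -> : (delta%:Z - 1 = (delta - 1)%N%:Z)%R by rewrite -[1%R]/((1%N)%:Z)%R subzn.
rewrite -PoszM; move: h; move: (t * (delta - 1))%N => x; lia.
Qed.

Lemma ar_d W w T kap tr X M : (W <= w)%N -> (w + T + (kap - tr) <= M + 1)%N ->
  T = (tr + X)%N -> (tr <= kap)%N -> (W + kap + X <= M + 1)%N.
Proof. lia. Qed.
Lemma ar_e kap r : (0 < kap)%N -> (r <= kap + r - 1)%N.
Proof. lia. Qed.
Lemma ar_f t kap r : (t.+1 * r <= kap + r - 1)%N -> (0 < kap)%N -> (t * r < kap)%N.
Proof. rewrite mulSn; lia. Qed.
Lemma ar_g t K delta : (delta <= K)%N -> (1 <= delta)%N ->
  (t * K = t * (K - delta + 1) + t * (delta - 1))%N.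
Proof. move=> *; rewrite -mulnDr; congr (_ * _); lia. Qed.
Section LRC2.
Local Open Scope ring_scope.
Variables (F : finFieldType) (n : nat) (K : 'I_n -> {set F}).
Variables (delta : nat) (s : 'I_n) (d : nat).
Local Notation m := #|Xset K|.
Local Notation D := (DX K delta s d).
Local Notation r := (#|K s| - delta + 1)%N.
Local Notation V := (<<enum D>>%VS : {vspace 'rV[F]_m}).

Lemma LRC_bound : (2 <= delta)%N -> (delta <= #|K s|)%N ->
  ((W1 D)%:Z <= (\prod_(i < n) #|K i|)%N%:Z - (dimF D)%:Z
     - (((dimF D + r - 1) %/ r)%N%:Z - 1) * (delta%:Z - 1) + 1)%R.
Proof.
move=> d2 dK; rewrite -card_X.
have W1m := W1_le_m D.
have -> : dimF D = \dim V by [].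
have r1 : (0 < r)%N by rewrite addn1.
case: (posnP (\dim V)) => [k0|k0].
  rewrite k0 add0n divn_small; last by rewrite addn1 subn1 /= ltnSn.
  exact: ar_int0.
set kap := \dim V.
set q := ((kap + r - 1) %/ r)%N.
have q1 : (0 < q)%N by rewrite divn_gt0 //; apply: ar_e.
have qr : (q * r <= kap + r - 1)%N by apply: leq_trunc_div.
pose t := q.-1.
have qt : q = t.+1 by rewrite /t prednK.
rewrite qt in qr.
have tr := ar_f qr k0.
have [T [clT cardT dimT]] := lines tr.
have pos : (0 < kap - t * r)%N by rewrite subn_gt0.
have dimU : (kap - t * r <= \dim (V :&: ZT T))%N by rewrite leq_subLR addnC.
have [c [cU c0 hc]] := greedy (capvSr _ _) pos dimU.
have cD : c \in D by apply: D_span; move: cU; rewrite memv_cap => /andP[].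
have Wc := W1_le cD c0.
rewrite qt; apply: (@ar_int _ _ _ _ _ (t * (delta - 1))%N) => //; last by apply: ltnW.
apply: (ar_d Wc hc); last exact: ltnW.
by rewrite cardT; apply: ar_g => //; apply: ltnW.
Qed.
End LRC2.
Section Final.
Local Open Scope ring_scope.
Variables (F : finFieldType) (n : nat) (K : 'I_n -> {set F}) (k : 'I_n) (l : nat).
Hypothesis K2 : forall i : 'I_n, (2 <= #|K i|)%N.
Hypothesis lk : (l <= #|K k| - 1)%N.

Definition nu0 (i : 'I_n) : nat :=
  if (i < k)%N then 1%N else if i == k then (#|K k| - l)%N else #|K i|.

Lemma nu0_le i : (nu0 i <= #|K i|)%N.
Proof.
rewrite /nu0; case: ifP => _; first by have := K2 i; lia.
by case: eqP => [->|_]; [apply: leq_subr|].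
Qed.

Lemma sum_nu0 : (\sum_i (#|K i| - nu0 i) = \sum_(i < n | (i < k)%N) (#|K i| - 1) + l)%N.
Proof.
rewrite (bigID (fun i : 'I_n => (i < k)%N)) /=; congr (_ + _).
  by apply: eq_bigr => i ik; rewrite /nu0 ik.
rewrite (bigD1 k) /=; last by rewrite ltnn.
rewrite big1 ?addn0.
  by rewrite /nu0 ltnn eqxx subKn //; apply: leq_trans lk (leq_subr _ _).
move=> i /andP[ik ink]; rewrite /nu0 (negPf ik) (negPf ink); exact: subnn.
Qed.

Lemma prod_nu0 : (\prod_i nu0 i = (#|K k| - l) * \prod_(i < n | (k < i)%N) #|K i|)%N.
Proof.
rewrite (bigID (fun i : 'I_n => (i < k)%N)) /=.
rewrite big1 ?mul1n; last by move=> i ik; rewrite /nu0 ik.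
rewrite (bigD1 k) /=; last by rewrite ltnn.
rewrite /nu0 ltnn eqxx; congr (_ * _).
rewrite (eq_bigl (fun i : 'I_n => (k < i)%N)); last first.
  move=> i /=; apply/idP/idP => [/andP[h1 h2]|h].
    by move: h1 h2; rewrite -val_eqE /=; lia.
  by apply/andP; split; [lia|rewrite -val_eqE /=; lia].
apply: eq_bigr => i ki.
have -> : (i < k)%N = false by lia.
by have -> : (i == k) = false by rewrite -val_eqE /=; lia.
Qed.

Lemma codeword (s : 'I_n) (tau : {perm 'I_n}) :
  (forall i, nu0 (tau i) <= #|K i|)%N ->
  exists f : {mpoly F[n]}, [/\ Pdeg (\sum_(i < n | (i < k)%N) (#|K i| - 1) + l)%N f,
    (degX s f <= #|K s| - nu0 (tau s))%N &
    wt (Psi K f) = ((#|K k| - l) * \prod_(i < n | (k < i)%N) #|K i|)%N].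
Proof.
move=> le.
have [f [hs [hd hw]]] := construct (K := K) s le.
exists f; split=> //.
  rewrite /Pdeg -sum_nu0; apply: leq_trans hs _.
  rewrite sumnB // sumnB; last by move=> i _; apply: nu0_le.
  by rewrite [X in (_ < (_ - X).+1)%N](reindex_inj (@perm_inj _ tau)).
rewrite hw -prod_nu0.
by rewrite [RHS](reindex_inj (@perm_inj _ tau)).
Qed.

Lemma tperm_le a b : (nu0 b <= #|K a|)%N -> (nu0 a <= #|K b|)%N ->
  forall i, (nu0 (tperm a b i) <= #|K i|)%N.
Proof. by move=> h1 h2 i; case: tpermP => [->|->|_ _] //; apply: nu0_le. Qed.

End Final.
Lemma wt0 (F : finFieldType) (n : nat) (K : 'I_n -> {set F}) : wt (0 : 'rV[F]_#|Xset K|) = 0%N.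
Proof. by rewrite /wt; apply/eqP; rewrite cards_eq0; apply/eqP/setP=> j; rewrite !inE mxE eqxx. Qed.

Theorem mainTheorem5 (F : finFieldType) (n : nat) (K : 'I_n -> {set F})
  (delta : nat) (s : 'I_n) (k : 'I_n) (l : nat) :
  (2 <= n)%N ->
  (forall i : 'I_n, 2 <= #|K i|)%N ->
  (forall i j : 'I_n, (i <= j)%N -> #|K i| <= #|K j|)%N ->
  (2 <= delta)%N ->
  (delta <= #|K s|)%N ->
  (0 < l)%N -> (l <= #|K k| - 1)%N ->
  let d := ((\sum_(i < n | (i < k)%N) (#|K i| - 1)) + l)%N in
  let m := (\prod_(i < n) #|K i|)%N in
  let r := (#|K s| - delta + 1)%N in
  let kappa := dimF (DX K delta s d) in
  let w := ((#|K k| - l) * \prod_(i < n | (k < i)%N) #|K i|)%N in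
  [/\ W1 (CX K d) = w,
      (W1 (CX K d) <= W1 (DX K delta s d))%N,
      ((W1 (DX K delta s d))%:Z <=
         m%:Z - kappa%:Z
         - (((kappa + r - 1) %/ r)%N%:Z - 1) * (delta%:Z - 1) + 1)%R
    & ((exists j : 'I_n, (j = k.+1 :> nat) /\ (#|K j| <= #|K s|)%N)
       \/ ((#|K s| <= #|K k|)%N /\ (#|K k| - l <= #|K s|)%N
           /\ (#|K s| - (#|K k| - l) < r)%N)) ->
      W1 (DX K delta s d) = W1 (CX K d) /\ W1 (CX K d) = w].
Proof.
move=> n2 K2 mono d2 dK l0 lk.
cbv zeta.
set d := (\sum_(i < n | (i < k)%N) (#|K i| - 1) + l)%N.
set w := ((#|K k| - l) * \prod_(i < n | (k < i)%N) #|K i|)%N.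
have w0 : (0 < w)%N.
  rewrite /w muln_gt0; apply/andP; split; first by lia.
  by apply: prodn_cond_gt0 => i _; have := K2 i; lia.
have LBl : forall c, c \in CX K d -> c != 0%R -> (w <= wt c)%N.
  move=> c /in_code[f [Pf <-]] nz; exact: LB.
have tp1 : forall i, (nu0 K k l ((1%g : {perm 'I_n}) i) <= #|K i|)%N.
  by move=> i; rewrite perm1; apply: nu0_le.
have [f0 [Pf0 _ wf0]] := codeword K2 lk s tp1.
rewrite -/w in wf0; rewrite -/d in Pf0.
have c0C : Psi K f0 \in CX K d by apply/in_code; exists f0.
have c0nz : Psi K f0 != 0%R.
  by apply: contraTneq w0 => E; rewrite -wf0 E wt0.
have Weq : W1 (CX K d) = w.
  apply/eqP; rewrite eqn_leq; apply/andP; split.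
    by rewrite -wf0; apply: W1_le.
  apply: W1_ge => //; rewrite -wf0; exact: wt_le.
have Wmono : (W1 (CX K d) <= W1 (DX K delta s d))%N.
  apply: W1_mono; apply/subsetP=> c /in_code[f [[Pf _] <-]].
  by apply/in_code; exists f.
split=> //.
  exact: LRC_bound.
move=> H.
suff [f [Pf wf]] : exists f, Pquasi K delta s d f /\ wt (Psi K f) = w.
  have cD : Psi K f \in DX K delta s d by apply/in_code; exists f.
  have nz : Psi K f != 0%R by apply: contraTneq w0 => E; rewrite -wf E wt0.
  have := W1_le cD nz; rewrite wf -Weq => h.
  by split=> //; apply/eqP; rewrite eqn_leq h Wmono.
have r1 : (0 < #|K s| - delta + 1)%N by rewrite addn1.
have fromtau : forall tau : {perm 'I_n}, (forall i, nu0 K k l (tau i) <= #|K i|)%N ->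
    (#|K s| - nu0 K k l (tau s) < #|K s| - delta + 1)%N ->
    exists f, Pquasi K delta s d f /\ wt (Psi K f) = w.
  move=> tau le hr; have [f [Pf hd wf]] := codeword K2 lk s le.
  by exists f; split=> //; split=> //; apply: leq_ltn_trans hd hr.
have nuk : nu0 K k l k = (#|K k| - l)%N by rewrite /nu0 ltnn eqxx.
have nugt : forall i : 'I_n, (k < i)%N -> nu0 K k l i = #|K i|.
  move=> i ki; rewrite /nu0; have -> : (i < k)%N = false by lia.
  by have -> : (i == k) = false by rewrite -val_eqE /=; lia.
have nult : forall i : 'I_n, (i < k)%N -> nu0 K k l i = 1%N by move=> i ik; rewrite /nu0 ik.
case: (ltngtP k s) => [ks|sk|ks].
- apply: (fromtau 1%g tp1); rewrite perm1 nugt // subnn; exact: r1.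
- case: H => [[j [jk js]]|[_ [h2 h3]]].
    have kj : (k < j)%N by rewrite jk.
    have sj : (s < j)%N by lia.
    apply: (fromtau (tperm s j)).
      apply: (tperm_le K2 lk); first by rewrite nugt.
      by rewrite nult //; have := K2 j; lia.
    rewrite tpermL nugt // (_ : #|K s| - #|K j| = 0)%N; first exact: r1.
    by apply/eqP; rewrite subn_eq0; apply: mono; apply: ltnW.
  apply: (fromtau (tperm s k)).
    apply: (tperm_le K2 lk); first by rewrite nuk.
    by rewrite nult //; have := K2 k; lia.
  by rewrite tpermL nuk.
- have ksE : k = s by apply: val_inj.
  case: H => [[j [jk js]]|[_ [h2 h3]]].
    have kj : (k < j)%N by rewrite jk.
    apply: (fromtau (tperm k j)).
      apply: (tperm_le K2 lk); first by rewrite nugt // ksE.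
      rewrite nuk; apply: leq_trans (leq_subr _ _) _; apply: mono; exact: ltnW.
    have -> : tperm k j s = j by rewrite -ksE tpermL.
    rewrite nugt // (_ : #|K s| - #|K j| = 0)%N; first exact: r1.
    by apply/eqP; rewrite subn_eq0 -ksE; apply: mono; apply: ltnW.
  apply: (fromtau 1%g tp1).
  by rewrite perm1 -[in nu0 K k l s]ksE nuk.
Qed.
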